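(* Let $k\in\mathbb{R}_{\ge0}$, let $(x_j,y_j,z_j)$ be a triple of the classical Euclid tree and $(X_j,Y_j,Z_j)$ the corresponding triple of the $k$-generalized Euclid tree, with comparison triple $(l_j,m_j,n_j)=(X_j/x_j,Y_j/y_j,Z_j/z_j)$. For $i\in\{1,2,3\}$ let $(l_{j+1},m_{j+1},n_{j+1})$ be the comparison triple of $\mathcal{M}_i(x_j,y_j,z_j)$ and $\mathcal{M}_{i;k}(X_j,Y_j,Z_j)$. Then: (1) if $m_j<n_j$ and $i=1$: $l_{j+1}\in[m_j,n_j]\iff k\le y_j(n_j-m_j)$; (2) if $n_j<m_j$ and $i=1$: $l_{j+1}\in[n_j,m_j]\iff k\le z_j(m_j-n_j)$; (3) if $l_j<n_j$ and $i=2$: $m_{j+1}\in[l_j,n_j]\iff k\le x_j(n_j-l_j)$; (4) if $n_j<l_j$ and $i=2$: $m_{j+1}\in[n_j,l_j]\iff k\le z_j(l_j-n_j)$; (5) if $l_j<m_j$ and $i=3$: $n_{j+1}\in[l_j,m_j]\iff k\le x_j(m_j-l_j)$; (6) if $m_j<l_j$ and $i=3$: $n_{j+1}\in[m_j,l_j]\iff k\le y_j(l_j-m_j)$. Moreover, if the inequality for $k$ holds strictly, the mutated component lies in the corresponding open interval.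
   Context: For $k\in\mathbb{R}_{\ge0}$: $\mathcal{M}_{1;k}(X,Y,Z)=(k+Y+Z,Y,Z)$, $\mathcal{M}_{2;k}(X,Y,Z)=(X,k+X+Z,Z)$, $\mathcal{M}_{3;k}(X,Y,Z)=(X,Y,k+X+Y)$ on $\mathbb{R}_+^3$, and $\mathcal{M}_i=\mathcal{M}_{i;0}$. The classical Euclid tree consists of the triples obtained from a $0$-initial triple $(a,b,c)\in\mathbb{R}_+^3$ by compositions of $\mathcal{M}_i$ along finite reduced sequences (consecutive indices distinct), and the $k$-generalized Euclid tree those obtained from a $k$-initial triple $(A,B,C)\in\mathbb{R}_+^3$ ($A\ne B+C+k$, $B\ne A+C+k$, $C\ne A+B+k$) by compositions of $\mathcal{M}_{i;k}$; corresponding triples are those obtained by the same sequence of indices. *)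

(* Defs.v *)
From Stdlib Require Import Reals List.
Import ListNotations.
Open Scope R_scope.

Record triple := mkT { t1 : R; t2 : R; t3 : R }.

Definition positive (t : triple) : Prop := 0 < t1 t /\ 0 < t2 t /\ 0 < t3 t.

(* The generalized maps M_{i;k}; M_i = M_{i;0}. Indices other than 1,2,3 act
   trivially but never occur in reduced sequences. *)
Definition Mk (k : R) (i : nat) (t : triple) : triple :=
  match i with
  | 1%nat => mkT (k + t2 t + t3 t) (t2 t) (t3 t)
  | 2%nat => mkT (t1 t) (k + t1 t + t3 t) (t3 t)
  | 3%nat => mkT (t1 t) (t2 t) (k + t1 t + t2 t)
  | _ => t
  end.

Definition M (i : nat) (t : triple) : triple := Mk 0 i t.

Definition applyseq (k : R) (s : list nat) (t : triple) : triple :=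
  fold_left (fun u i => Mk k i u) s t.

Fixpoint reduced (s : list nat) : Prop :=
  match s with
  | [] => True
  | i :: s' =>
      (i = 1%nat \/ i = 2%nat \/ i = 3%nat) /\
      match s' with
      | [] => True
      | j :: _ => i <> j
      end /\ reduced s'
  end.

(* k-initial triple (0-initial = initial triple of the classical tree). *)
Definition k_initial (k : R) (t : triple) : Prop :=
  positive t /\
  t1 t <> t2 t + t3 t + k /\ t2 t <> t1 t + t3 t + k /\ t3 t <> t1 t + t2 t + k.

Definition comparison (t T : triple) : triple :=
  mkT (t1 T / t1 t) (t2 T / t2 t) (t3 T / t3 t).

(* Main.v *)
Require Import Defs.
From Stdlib Require Import Reals List Lra Psatz.
Import ListNotations.
Open Scope R_scope.

Lemma pos_Mk k i t : 0 <= k -> Defs.positive t -> Defs.positive (Mk k i t).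
Proof.
  intros hk [h1 [h2 h3]]. unfold Defs.positive.
  destruct i as [|[|[|[|i]]]]; simpl; repeat split; lra.
Qed.

Lemma pos_apply k s t : 0 <= k -> Defs.positive t -> Defs.positive (applyseq k s t).
Proof.
  revert t; induction s as [|a s IH]; intros t hk ht; simpl; auto.
  apply IH; auto. apply pos_Mk; auto.
Qed.

Lemma le_divr a b d : 0 < d -> (a <= b / d <-> a * d <= b).
Proof. intros hd. split; intro h.
  - apply Rmult_le_reg_r with (/d). apply Rinv_0_lt_compat; lra.
    rewrite Rmult_assoc, Rinv_r by lra. unfold Rdiv in h. lra.
  - unfold Rdiv. apply Rmult_le_reg_r with d; auto.
    rewrite Rmult_assoc, Rinv_l by lra. lra. Qed.
Lemma le_divl a b d : 0 < d -> (b / d <= a <-> b <= a * d).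
Proof. intros hd. split; intro h.
  - apply Rmult_le_reg_r with (/d). apply Rinv_0_lt_compat; lra.
    rewrite Rmult_assoc, Rinv_r by lra. unfold Rdiv in h. lra.
  - unfold Rdiv. apply Rmult_le_reg_r with d; auto.
    rewrite Rmult_assoc, Rinv_l by lra. lra. Qed.
Lemma lt_divr a b d : 0 < d -> (a < b / d <-> a * d < b).
Proof. intros hd. split; intro h.
  - apply Rmult_lt_reg_r with (/d). apply Rinv_0_lt_compat; lra.
    rewrite Rmult_assoc, Rinv_r by lra. unfold Rdiv in h. lra.
  - unfold Rdiv. apply Rmult_lt_reg_r with d; auto.
    rewrite Rmult_assoc, Rinv_l by lra. lra. Qed.
Lemma lt_divl a b d : 0 < d -> (b / d < a <-> b < a * d).
Proof. intros hd. split; intro h.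
  - apply Rmult_lt_reg_r with (/d). apply Rinv_0_lt_compat; lra.
    rewrite Rmult_assoc, Rinv_r by lra. unfold Rdiv in h. lra.
  - unfold Rdiv. apply Rmult_lt_reg_r with d; auto.
    rewrite Rmult_assoc, Rinv_l by lra. lra. Qed.

Lemma divK X x : 0 < x -> X = (X / x) * x.
Proof. intros; field; lra. Qed.

(* generic core: mutated coordinate (k + A + B)/(a+b) with A = p a, B = q b *)
Lemma core k a b p q : 0 <= k -> 0 < a -> 0 < b -> p < q ->
  ((p <= (k + p*a + q*b)/(a+b) <= q) <-> k <= a * (q - p)) /\
  (k < a * (q - p) -> p < (k + p*a + q*b)/(a+b) < q).
Proof.
  intros hk ha hb hpq.
  assert (hab : 0 < a + b) by lra.
  rewrite le_divr, le_divl by auto.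
  split; [split|].
  - intros [_ h]. nra.
  - intro h. split; nra.
  - intro h. rewrite lt_divr, lt_divl by auto. split; nra.
Qed.
Lemma core' k a b p q : 0 <= k -> 0 < a -> 0 < b -> p < q ->
  ((p <= (k + q*b + p*a)/(b+a) <= q) <-> k <= a * (q - p)) /\
  (k < a * (q - p) -> p < (k + q*b + p*a)/(b+a) < q).
Proof.
  intros. replace (k + q*b + p*a) with (k + p*a + q*b) by ring.
  rewrite (Rplus_comm b a). apply core; auto.
Qed.
Lemma abs_main k (hk : 0 <= k) (x y z X Y Z : R) :
  0 < x -> 0 < y -> 0 < z -> 0 < X -> 0 < Y -> 0 < Z ->
  forall i : nat, (i = 1 \/ i = 2 \/ i = 3)%nat ->
  let tj := mkT x y z in
  let Tj := mkT X Y Z in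
  let l := t1 (comparison tj Tj) in
  let m := t2 (comparison tj Tj) in
  let n := t3 (comparison tj Tj) in
  let c' := comparison (M i tj) (Mk k i Tj) in
  let l' := t1 c' in let m' := t2 c' in let n' := t3 c' in
  (i = 1%nat -> m < n ->
     ((m <= l' <= n) <-> k <= y * (n - m)) /\ (k < y * (n - m) -> m < l' < n)) /\
  (i = 1%nat -> n < m ->
     ((n <= l' <= m) <-> k <= z * (m - n)) /\ (k < z * (m - n) -> n < l' < m)) /\
  (i = 2%nat -> l < n ->
     ((l <= m' <= n) <-> k <= x * (n - l)) /\ (k < x * (n - l) -> l < m' < n)) /\
  (i = 2%nat -> n < l ->
     ((n <= m' <= l) <-> k <= z * (l - n)) /\ (k < z * (l - n) -> n < m' < l)) /\
  (i = 3%nat -> l < m ->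
     ((l <= n' <= m) <-> k <= x * (m - l)) /\ (k < x * (m - l) -> l < n' < m)) /\
  (i = 3%nat -> m < l ->
     ((m <= n' <= l) <-> k <= y * (l - m)) /\ (k < y * (l - m) -> m < n' < l)).
Proof.
  intros hx hy hz hX hY hZ i hi. cbv zeta. unfold comparison, M, Mk. simpl.
  rewrite (divK X x hx), (divK Y y hy), (divK Z z hz).
  set (l := X / x). set (m := Y / y). set (n := Z / z).
  clearbody l m n.
  rewrite !Rplus_0_l.
  assert (E1 : l * x / x = l) by (field; lra).
  assert (E2 : m * y / y = m) by (field; lra).
  assert (E3 : n * z / z = n) by (field; lra).
  split; [|split; [|split; [|split; [|split]]]]; intros -> h; simpl; rewrite ?E1, ?E2, ?E3.
  all: rewrite ?E1, ?E2, ?E3 in h; first [ apply core; assumption | apply core'; assumption ].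
Qed.

Theorem lemma4p2 (k : R) (hk : 0 <= k) (t0 T0 : triple)
  (h0 : k_initial 0 t0) (hK : k_initial k T0)
  (s : list nat) (hs : reduced s) (i : nat) (hi : (i = 1 \/ i = 2 \/ i = 3)%nat) :
  let tj := applyseq 0 s t0 in
  let Tj := applyseq k s T0 in
  let x := t1 tj in let y := t2 tj in let z := t3 tj in
  let l := t1 (comparison tj Tj) in
  let m := t2 (comparison tj Tj) in
  let n := t3 (comparison tj Tj) in
  let c' := comparison (M i tj) (Mk k i Tj) in
  let l' := t1 c' in let m' := t2 c' in let n' := t3 c' in
  (i = 1%nat -> m < n ->
     ((m <= l' <= n) <-> k <= y * (n - m)) /\ (k < y * (n - m) -> m < l' < n)) /\
  (i = 1%nat -> n < m ->
     ((n <= l' <= m) <-> k <= z * (m - n)) /\ (k < z * (m - n) -> n < l' < m)) /\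
  (i = 2%nat -> l < n ->
     ((l <= m' <= n) <-> k <= x * (n - l)) /\ (k < x * (n - l) -> l < m' < n)) /\
  (i = 2%nat -> n < l ->
     ((n <= m' <= l) <-> k <= z * (l - n)) /\ (k < z * (l - n) -> n < m' < l)) /\
  (i = 3%nat -> l < m ->
     ((l <= n' <= m) <-> k <= x * (m - l)) /\ (k < x * (m - l) -> l < n' < m)) /\
  (i = 3%nat -> m < l ->
     ((m <= n' <= l) <-> k <= y * (l - m)) /\ (k < y * (l - m) -> m < n' < l)).
Proof.
  assert (P1 : Defs.positive (applyseq 0 s t0)) by (apply pos_apply; [lra | apply h0]).
  assert (P2 : Defs.positive (applyseq k s T0)) by (apply pos_apply; [lra | apply hK]).
  destruct (applyseq 0 s t0) as [x y z]; destruct (applyseq k s T0) as [X Y Z].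
  destruct P1 as [? [? ?]]; destruct P2 as [? [? ?]]; simpl in *.
  exact (abs_main k hk x y z X Y Z ltac:(assumption) ltac:(assumption) ltac:(assumption)
           ltac:(assumption) ltac:(assumption) ltac:(assumption) i hi).
Qed.
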